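(* Let $G$, $H$, the supervisors with $\Sigma_{o,i},\Sigma_{c,i},N_{o,i}$, a controllable event $\sigma\in\Sigma_c$, $N=\max\{N_{o,i}:i\in I^c(\sigma)\}$, and the verifiers $V^k_\sigma$ ($k=0,\dots,N$) with reachable state sets $X^k_\sigma$ be as in the context. Then $\mathcal{L}(H)$ is delay coobservable w.r.t. $N_{o,1},\dots,N_{o,n}$, $\sigma$, and $\mathcal{L}(G)$ if and only if for every $k\in\{0,1,\dots,N\}$ there is no state $(q,(q_i)_{i\in I^c(\sigma)},k)\in X^k_\sigma$ with $\sigma\in\Gamma(q)\setminus\Gamma_H(q)$ and $\sigma\in\Gamma^{aug}_{H,N_{o,i}}(q_i)$ for all $i\in I^c(\sigma)$.
   Context: $G=(Q,\Sigma,\delta,\Gamma,q_0,Q_m)$ is a deterministic finite automaton (transition function extended to strings; $\Gamma(q)$ = set of events defined at $q$; $\mathcal{L}(G)$ its generated language). $H=(Q_H,\Sigma,\delta_H,\Gamma_H,q_0,Q_{m,H})$ is a sub-automaton of $G$. For a string $s$, $|s|$ is its length, $s_{-m}$ its prefix of length $\max\{0,|s|-m\}$, $\Sigma^{\le M}$ the strings of length at most $M$. Supervisors $I=\{1,\dots,n\}$: supervisor $i$ has observable events $\Sigma_{o,i}$, $\Sigma_{uo,i}=\Sigma\setminus\Sigma_{o,i}$, controllable events $\Sigma_{c,i}$, delay bound $N_{o,i}\in\mathbb{N}$; $\Sigma_c=\bigcup_i\Sigma_{c,i}$, $I^c(\sigma)=\{i:\sigma\in\Sigma_{c,i}\}$.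 $P_i$ is natural projection onto $\Sigma_{o,i}^*$; $\Theta_i^{N_{o,i}}(s)=\{P_i(s_{-m}):0\le m\le N_{o,i}\}$ for $s\in\mathcal{L}(G)$; $(\Theta_i^{N_{o,i}})^{-1}(t)=\{u\in\mathcal{L}(G):t\in\Theta_i^{N_{o,i}}(u)\}$, extended to sets elementwise. $\mathcal{L}(H)$ is delay coobservable w.r.t. $N_{o,1},\dots,N_{o,n}$, $\sigma$, and $\mathcal{L}(G)$ if for every $s\in\mathcal{L}(H)$ with $s\sigma\in\mathcal{L}(G)\setminus\mathcal{L}(H)$ there is $i\in I^c(\sigma)$ with $(\Theta_i^{N_{o,i}})^{-1}(\Theta_i^{N_{o,i}}(s))\sigma\cap\mathcal{L}(H)=\emptyset$. Augmented automaton $H^{aug}_N$: states $Q_H\cup\{q_{dis}\}$; for $q\in Q_H$, $e\in\Sigma$: $\delta^{aug}(q,e)=\delta_H(q,e)$ if $e\in\Gamma_H(q)$, $=q_{dis}$ if $e\notin\Gamma_H(q)$ and $e\in\Gamma_H(\delta_H(q,s'))$ for some $s'\in\Sigma^{\le N}$ with $\delta_H(q,s')$ defined, undefined otherwise; $\Gamma^{aug}_{H,N}(q)$ is the set of events defined at $q$ in $H^{aug}_N$. For $k\in\{0,\dots,N\}$ the verifier $V^k_\sigma$ has states $(q,(q_i)_{i\in I^c(\sigma)},d)$ with $q,q_i\in Q_H$, $d\in[0,k]$. Initial states: for $k<N$, the single state $(q_0,(q_0)_i,0)$; for $k=N$, all $(q,(q_i)_i,0)$ such that there exist $t\in\mathcal{L}(H)$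 with $q=\delta_H(q_0,t)$ and, for each $i\in I^c(\sigma)$, $s_i\in\mathcal{L}(H)$ with $q_i=\delta_H(q_0,s_i)$ and $P_i(s_i)=P_i(t)$. At a state $(q,(q_i)_i,d)$ and for $e\in\Sigma$, each $i\in I^c(\sigma)$ falls in one case: C1: $k-d>N_{o,i}$, $e\in\Sigma_{o,i}$; C2: $k-d>N_{o,i}$, $e\in\Sigma_{uo,i}$; C3: $k-d\le N_{o,i}$, $\sigma\notin\Gamma^{aug}_{H,N_{o,i}}(q_i)$, $e\in\Sigma_{o,i}$; C4: $k-d\le N_{o,i}$, $\sigma\notin\Gamma^{aug}_{H,N_{o,i}}(q_i)$, $e\in\Sigma_{uo,i}$; C5: $k-d\le N_{o,i}$, $\sigma\in\Gamma^{aug}_{H,N_{o,i}}(q_i)$. Type-1 transition: if $d+1\le k$, $\delta_H(q,e)$ is defined, and $\delta_H(q_i,e)$ is defined for every $i$ in C1 or C3, there is a transition to $(\delta_H(q,e),(q_i')_i,d+1)$ with $q_i'=\delta_H(q_i,e)$ for $i$ in C1 or C3 and $q_i'=q_i$ otherwise. Type-2 transition: for each $i$ in C2 or C4 with $\delta_H(q_i,e)$ defined, there is a transition to the state obtained by replacing $q_i$ by $\delta_H(q_i,e)$, all other components unchanged. $X^k_\sigma$ is the set of states of $V^k_\sigma$ reachable from its initial state(s). *)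

(* Defs.v *)
From mathcomp Require Import all_boot.
Set Implicit Arguments. Unset Strict Implicit. Unset Printing Implicit Defensive.

Section DelayCoobs.
Variables (Q Sigma : finType).

Definition ext (d : Q -> Sigma -> option Q) (q : Q) (s : seq Sigma) : option Q :=
  foldl (fun o e => if o is Some p then d p e else None) (Some q) s.

Definition lang (d : Q -> Sigma -> option Q) (q0 : Q) (s : seq Sigma) : Prop :=
  ext d q0 s <> None.

Definition proj (So : {set Sigma}) (s : seq Sigma) : seq Sigma :=
  [seq e <- s | e \in So].

Definition trunc (s : seq Sigma) (m : nat) : seq Sigma := take (size s - m) s.

Definition Theta (So : {set Sigma}) (No : nat) (s t : seq Sigma) : Prop :=
  exists m, m <= No /\ t = proj So (trunc s m).

Definition Theta_inv (delta : Q -> Sigma -> option Q) (q0 : Q)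
  (So : {set Sigma}) (No : nat) (T : seq Sigma -> Prop) (u : seq Sigma) : Prop :=
  lang delta q0 u /\ exists t, T t /\ Theta So No u t.

Definition delay_coobservable (delta deltaH : Q -> Sigma -> option Q) (q0 : Q)
  (n : nat) (So Sc : 'I_n -> {set Sigma}) (No : 'I_n -> nat) (sigma : Sigma) : Prop :=
  forall s, lang deltaH q0 s ->
    lang delta q0 (rcons s sigma) -> ~ lang deltaH q0 (rcons s sigma) ->
    exists i, sigma \in Sc i /\
      forall u, Theta_inv delta q0 (So i) (No i) (Theta (So i) (No i) s) u ->
        ~ lang deltaH q0 (rcons u sigma).

(* Augmented automaton H^aug_N: transitions from q \in Q_H, with target
   [Some q'] a state of Q_H or [None] standing for q_dis. *)
Definition aug_trans (QH : {set Q}) (deltaH : Q -> Sigma -> option Q) (N : nat)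
  (q : Q) (e : Sigma) (x : option Q) : Prop :=
  q \in QH /\
  ((exists q', deltaH q e = Some q' /\ x = Some q') \/
   (deltaH q e = None /\ x = None /\
     exists s' p, size s' <= N /\ ext deltaH q s' = Some p /\ deltaH p e <> None)).

Definition GammaAug (QH : {set Q}) (deltaH : Q -> Sigma -> option Q) (N : nat)
  (q : Q) (e : Sigma) : Prop :=
  exists x, aug_trans QH deltaH N q e x.

Section Verifier.
Variables (QH : {set Q}) (deltaH : Q -> Sigma -> option Q) (q0 : Q)
  (n : nat) (So Sc : 'I_n -> {set Sigma}) (No : 'I_n -> nat) (sigma : Sigma).

Definition Ic (i : 'I_n) : bool := sigma \in Sc i.

Definition Nmax : nat := \max_(i < n | Ic i) No i.

(* Verifier states (q, (q_i)_i, d); the components q_i for i \notin I^c(sigma)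
   are dummy (fixed to q0, never updated). *)
Definition vstate : Type := (Q * ('I_n -> Q) * nat)%type.

Definition C1 (k d : nat) (i : 'I_n) (qi : Q) (e : Sigma) : Prop :=
  No i < k - d /\ e \in So i.
Definition C2 (k d : nat) (i : 'I_n) (qi : Q) (e : Sigma) : Prop :=
  No i < k - d /\ e \notin So i.
Definition C3 (k d : nat) (i : 'I_n) (qi : Q) (e : Sigma) : Prop :=
  k - d <= No i /\ ~ GammaAug QH deltaH (No i) qi sigma /\ e \in So i.
Definition C4 (k d : nat) (i : 'I_n) (qi : Q) (e : Sigma) : Prop :=
  k - d <= No i /\ ~ GammaAug QH deltaH (No i) qi sigma /\ e \notin So i.
Definition C5 (k d : nat) (i : 'I_n) (qi : Q) (e : Sigma) : Prop :=
  k - d <= No i /\ GammaAug QH deltaH (No i) qi sigma.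

Definition v_init (k : nat) (x : vstate) : Prop :=
  let: (q, qs, d) := x in
  d = 0 /\
  if k < Nmax then q = q0 /\ (forall i, qs i = q0)
  else k = Nmax /\
    exists t, lang deltaH q0 t /\ ext deltaH q0 t = Some q /\
      forall i, (Ic i -> exists si, lang deltaH q0 si /\
                   ext deltaH q0 si = Some (qs i) /\ proj (So i) si = proj (So i) t)
             /\ (~~ Ic i -> qs i = q0).

Definition v_step1 (k : nat) (x y : vstate) : Prop :=
  let: (q, qs, d) := x in
  exists e q' qs',
    d.+1 <= k /\ deltaH q e = Some q' /\
    (forall i, Ic i -> (C1 k d i (qs i) e \/ C3 k d i (qs i) e) ->
        deltaH (qs i) e = Some (qs' i)) /\
    (forall i, ~ (Ic i /\ (C1 k d i (qs i) e \/ C3 k d i (qs i) e)) -> qs' i = qs i) /\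
    y = (q', qs', d.+1).

Definition v_step2 (k : nat) (x y : vstate) : Prop :=
  let: (q, qs, d) := x in
  exists e i qi',
    Ic i /\ (C2 k d i (qs i) e \/ C4 k d i (qs i) e) /\
    deltaH (qs i) e = Some qi' /\
    y = (q, (fun j => if j == i then qi' else qs j), d).

Inductive v_reach (k : nat) : vstate -> Prop :=
| VR_init x : v_init k x -> v_reach k x
| VR_step1 x y : v_reach k x -> v_step1 k x y -> v_reach k y
| VR_step2 x y : v_reach k x -> v_step2 k x y -> v_reach k y.

End Verifier.
End DelayCoobs.

(* Main.v *)
Require Import Defs.
From mathcomp Require Import all_boot zify.
From Stdlib Require Import Classical ClassicalEpsilon.
Set Implicit Arguments. Unset Strict Implicit. Unset Printing Implicit Defensive.

Section Gen.
Variables (Q Sigma : finType).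
Implicit Types (d : Q -> Sigma -> option Q) (s : seq Sigma).

Lemma foldl_None d s :
  foldl (fun o e => if o is Some p then d p e else None) None s = None.
Proof. by elim: s. Qed.

Lemma ext_cons d q e s :
  ext d q (e :: s) = if d q e is Some p then ext d p s else None.
Proof. rewrite /ext /=; case: (d q e) => [p|] //; exact: foldl_None. Qed.

Lemma ext_cat d q a b :
  ext d q (a ++ b) = if ext d q a is Some p then ext d p b else None.
Proof.
elim: a q => [|e a IH] q //=.
rewrite !ext_cons; case: (d q e) => [p|] //.
Qed.

Lemma ext_rcons d q s e :
  ext d q (rcons s e) = if ext d q s is Some p then d p e else None.
Proof. by rewrite -cats1 ext_cat; case: (ext d q s). Qed.

Lemma proj_cat (A : {set Sigma}) a b : proj A (a ++ b) = proj A a ++ proj A b.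
Proof. exact: filter_cat. Qed.

Lemma proj_rcons (A : {set Sigma}) a e :
  proj A (rcons a e) = if e \in A then rcons (proj A a) e else proj A a.
Proof. by rewrite /proj filter_rcons. Qed.

Lemma proj_prefix (A : {set Sigma}) u a b :
  proj A u = a ++ b -> exists v r, u = v ++ r /\ proj A v = a.
Proof.
elim: u a => [|x u IH] a /=.
  by case: a => // _; exists [::], [::].
case: a => [|y a] H; first by exists [::], (x :: u).
move: H; rewrite /proj /=; case: ifP => xA.
  case=> <- H; have [v [r [-> Hv]]] := IH _ H.
  by exists (x :: v), r; split=> //; rewrite /= xA -Hv.
move=> H; have [v [r [-> Hv]]] := IH (y :: a) H.
by exists (x :: v), r; split=> //; rewrite /= xA -Hv.
Qed.

Lemma sub_ext (QH : {set Q}) delta deltaH :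
  (forall q e q', q \in QH -> deltaH q e = Some q' ->
      q' \in QH /\ delta q e = Some q') ->
  forall s q p, q \in QH -> ext deltaH q s = Some p ->
    p \in QH /\ ext delta q s = Some p.
Proof.
move=> hsub; elim=> [|e s IH] q p qH /=; first by case=> <-.
rewrite !ext_cons; case E: (deltaH q e) => [p'|] // H.
have [p'H ->] := hsub _ _ _ qH E; exact: IH.
Qed.

End Gen.

Section Sound.
Variables (Q Sigma : finType) (delta deltaH : Q -> Sigma -> option Q) (q0 : Q)
  (QH : {set Q}) (n : nat) (So Sc : 'I_n -> {set Sigma}) (No : 'I_n -> nat)
  (sigma : Sigma).

Definition Inv (k : nat) (x : vstate Q n) : Prop :=
  let: (q, qs, d) := x in
  exists t0 w, size w = d /\ ext deltaH q0 (t0 ++ w) = Some q /\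
   forall i, Ic Sc sigma i -> exists u' d0, ext deltaH q0 u' = Some (qs i) /\
     d0 <= d /\ proj (So i) u' = proj (So i) (t0 ++ take d0 w) /\
     (d0 = d \/ (k - d0 <= No i /\ GammaAug QH deltaH (No i) (qs i) sigma)).

Lemma inv_reach k x : v_reach QH deltaH q0 So Sc No sigma k x -> Inv k x.
Proof.
elim=> {x}.
- move=> [[q qs] d] /=; case=> ->; case: ifP => _.
    case=> -> Hqs; exists [::], [::]; split=> //; split=> //.
    by move=> i _; exists [::], 0; rewrite Hqs; split; [|split; [|split; [|left]]].
  case=> _ [t [_ [Ht Hi]]]; exists t, [::]; rewrite cats0; split=> //; split=> //.
  move=> i Ii; have [Hsi _] := Hi i; have [si' [_ [Hsi' Hp']]] := Hsi Ii.
  exists si', 0; split=> //; split=> //; split; last by left.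
  by [] .
- move=> [[q qs] d] y _ IH [e [q' [qs' [hd [hq [H1 [H2 ->]]]]]]].
  move: IH => [t0 [w [hw [hq0 Hi]]]]; exists t0, (rcons w e).
  split; first by rewrite size_rcons hw.
  split; first by rewrite -rcons_cat ext_rcons hq0.
  move=> i Ii; have [u' [d0 [hu [hd0 [hp hor]]]]] := Hi i Ii.
  case: (classic (C1 So No k d i (qs i) e \/ C3 QH deltaH So No sigma k d i (qs i) e)) => Hc.
    have He := H1 i Ii Hc.
    case: hor => [Ed0 | [hk hg]]; last first.
      by exfalso; case: Hc => [[hlt _]|[_ [hng _]]] //; lia.
    subst d0; have eSo : e \in So i by case: Hc => [[_ ?]|[_ [_ ?]]].
    exists (rcons u' e), d.+1; split; first by rewrite ext_rcons hu He.
    split=> //; split; last by left.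
    by rewrite take_oversize ?size_rcons ?hw // -rcons_cat !proj_rcons eSo hp -hw take_size.
  have Eq : qs' i = qs i by apply: H2 => -[_]. rewrite Eq.
  case: hor => [Ed0 | [hk hg]].
    subst d0; case: (boolP (e \in So i)) => eSo.
      have hk : k - d <= No i.
        by case: (leqP (k - d) (No i)) => // hlt; exfalso; apply: Hc; left.
      have hg : GammaAug QH deltaH (No i) (qs i) sigma.
        by apply: NNPP => hng; apply: Hc; right.
      exists u', d; split=> //; split=> //; split; last by right.
      by rewrite hp -cats1 -hw take_size_cat // take_size.
    exists u', d.+1; split=> //; split=> //; split; last by left.
    by rewrite take_oversize ?size_rcons ?hw // -rcons_cat proj_rcons (negbTE eSo) hp -hw take_size.
  exists u', d0; split=> //; split; first lia.
  split; last by right.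
  by rewrite -cats1 takel_cat ?hw.
- move=> [[q qs] d] y _ IH [e [i [qi' [Ii [Hc [He ->]]]]]].
  move: IH => [t0 [w [hw [hq0 Hi]]]]; exists t0, w; split=> //; split=> //.
  move=> j Ij /=; case: (eqVneq j i) => [->|nji]; last exact: Hi.
  have [u' [d0 [hu [hd0 [hp hor]]]]] := Hi i Ii.
  have eSo : e \notin So i by case: Hc => [[_ ?]|[_ [_ ?]]].
  case: hor => [Ed0 | [hk hg]]; last first.
    by exfalso; case: Hc => [[hlt _]|[_ [hng _]]] //; lia.
  subst d0; exists (rcons u' e), d; split; first by rewrite ext_rcons hu He.
  split=> //; split; last by left.
  by rewrite proj_rcons (negbTE eSo).
Qed.

Lemma sound (q0H : q0 \in QH)
  (hsub : forall q e q', q \in QH -> deltaH q e = Some q' ->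
      q' \in QH /\ delta q e = Some q') :
  delay_coobservable delta deltaH q0 So Sc No sigma ->
  forall k, ~ exists (q : Q) (qs : 'I_n -> Q),
         v_reach QH deltaH q0 So Sc No sigma k (q, qs, k) /\
         delta q sigma <> None /\ deltaH q sigma = None /\
         (forall i, sigma \in Sc i -> GammaAug QH deltaH (No i) (qs i) sigma).
Proof.
move=> Hco k [q [qs [Hr [Hd [HdH Hg]]]]].
have [t0 [w [hw [hq Hi]]]] := inv_reach Hr.
set s := t0 ++ w.
have Ls : lang deltaH q0 s by rewrite /lang hq.
have [_ hqG] := sub_ext hsub q0H hq.
have LGs : lang delta q0 (rcons s sigma) by rewrite /lang ext_rcons hqG.
have NLHs : ~ lang deltaH q0 (rcons s sigma) by rewrite /lang ext_rcons hq HdH.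
have [i [Ii Hu]] := Hco s Ls LGs NLHs.
have [u' [d0 [hu [hd0 [hp hor]]]]] := Hi i Ii.
have hkd0 : k - d0 <= No i by case: hor => [->|[]//]; rewrite subnn.
have [x [hqH hx]] := Hg i Ii.
have [s' [p [hs' [hp' hpn]]]] : exists s' p, size s' <= No i /\
    ext deltaH (qs i) s' = Some p /\ deltaH p sigma <> None.
  case: hx => [[q' [E _]]|[_ [_ [s' [p [? [? ?]]]]]]]; last by exists s', p.
  by exists [::], (qs i); rewrite /= E.
have hup : ext deltaH q0 (u' ++ s') = Some p by rewrite ext_cat hu hp'.
apply: (Hu (u' ++ s')); last by rewrite /lang ext_rcons hup.
split; first by have [_ h] := sub_ext hsub q0H hup; rewrite /lang h.
exists (proj (So i) u'); split.
  exists (k - d0); split=> //; rewrite hp /trunc size_cat hw.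
  rewrite (_ : size t0 + k - (k - d0) = size t0 + d0); last by lia.
  by rewrite takeD take_size_cat // drop_size_cat.
exists (size s'); split=> //.
by rewrite /trunc size_cat addnK take_size_cat.
Qed.

End Sound.

Lemma catlI (T : Type) (a b c : seq T) (H : a ++ b = a ++ c) : b = c.
Proof. by elim: a H => //= x a IH [] /IH. Qed.

Section Construct.
Variables (Q Sigma : finType) (deltaH : Q -> Sigma -> option Q) (q0 : Q)
  (QH : {set Q}) (n : nat) (So Sc : 'I_n -> {set Sigma}) (No : 'I_n -> nat)
  (sigma : Sigma) (k : nat) (t0 w : seq Sigma) (u : 'I_n -> seq Sigma)
  (ds : 'I_n -> nat).
Hypothesis hwk : size w = k.
Hypothesis hs : ext deltaH q0 (t0 ++ w) <> None.
Hypothesis hu_ext : forall i, Ic Sc sigma i -> ext deltaH q0 (u i) <> None.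
Hypothesis hu_gam : forall i, Ic Sc sigma i -> forall x,
  ext deltaH q0 (u i) = Some x -> GammaAug QH deltaH (No i) x sigma.
Hypothesis hds : forall i, Ic Sc sigma i -> ds i <= k /\ k - ds i <= No i /\
  proj (So i) (u i) = proj (So i) (t0 ++ take (ds i) w).

Notation reach := (v_reach QH deltaH q0 So Sc No sigma k).

Definition Track i d x := exists v r, u i = v ++ r /\ ext deltaH q0 v = Some x /\
  proj (So i) v = proj (So i) (t0 ++ take d w).
Definition Frozen i d x := k - d <= No i /\ GammaAug QH deltaH (No i) x sigma.
Definition Sat i d x := Frozen i d x \/ exists v r, u i = v ++ r /\
  ext deltaH q0 v = Some x /\ proj (So i) v = proj (So i) (t0 ++ take d w) /\
  (forall e r', r = e :: r' -> e \in So i).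

Lemma ext_prefix a b x : ext deltaH x (a ++ b) <> None ->
  exists y, ext deltaH x a = Some y.
Proof. by rewrite ext_cat; case: (ext deltaH x a) => [y|] // _; exists y. Qed.

Lemma sat_one i q qs d : Ic Sc sigma i -> reach (q, qs, d) ->
  Track i d (qs i) \/ Frozen i d (qs i) ->
  exists qs', reach (q, qs', d) /\ Sat i d (qs' i) /\
    forall j, j != i -> qs' j = qs j.
Proof.
move=> Ii Hr [|Hf]; last by exists qs; split=> //; split=> //; left.
move=> [v [r [Hu [Hv Hp]]]].
elim: r v qs Hr Hu Hv Hp => [|e r IH] v qs Hr Hu Hv Hp.
  exists qs; split=> //; split=> //; right; exists v, [::]; split=> //.
case: (boolP (e \in So i)) => eSo.
  exists qs; split=> //; split=> //; right; exists v, (e :: r); split=> //.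
  by split=> //; split=> // e' r' [<- _].
case: (classic (Frozen i d (qs i))) => Hf.
  by exists qs; split=> //; split=> //; left.
have := hu_ext Ii; rewrite Hu -cat_rcons => /ext_prefix [y].
rewrite ext_rcons Hv => Hy.
set qs2 := fun j => if j == i then y else qs j.
have Hr2 : reach (q, qs2, d).
  apply: (VR_step2 Hr); exists e, i, y; split=> //; split=> //.
  case: (leqP (k - d) (No i)) => hk; last by left.
  by right; split=> //; split=> // hg; apply: Hf.
have Hu2 : u i = rcons v e ++ r by rewrite cat_rcons.
have Hv2 : ext deltaH q0 (rcons v e) = Some (qs2 i) by rewrite ext_rcons Hv /qs2 eqxx.
have Hp2 : proj (So i) (rcons v e) = proj (So i) (t0 ++ take d w)
  by rewrite proj_rcons (negbTE eSo).
have [qs' [Hr' [Hs' Ho]]] := IH (rcons v e) qs2 Hr2 Hu2 Hv2 Hp2.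
exists qs'; split=> //; split=> //.
by move=> j nji; rewrite Ho // /qs2 (negbTE nji).
Qed.

Lemma sat_all q qs d : reach (q, qs, d) ->
  (forall i, Ic Sc sigma i -> Track i d (qs i) \/ Frozen i d (qs i)) ->
  exists qs', reach (q, qs', d) /\ forall i, Ic Sc sigma i -> Sat i d (qs' i).
Proof.
move=> Hr Htf.
have gen : forall l : seq 'I_n, exists qs', reach (q, qs', d) /\
    (forall i, i \in l -> Ic Sc sigma i -> Sat i d (qs' i)) /\
    (forall i, i \notin l -> qs' i = qs i).
  elim=> [|a l [qs1 [Hr1 [Hs1 Ho1]]]]; first by exists qs.
case: (boolP (Ic Sc sigma a)) => Ia; last first.
  exists qs1; split=> //; split.
    move=> i; rewrite inE => /orP [/eqP -> |il]; first by rewrite (negbTE Ia).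
    exact: Hs1.
  by move=> i; rewrite inE negb_or => /andP [_]; apply: Ho1.
have Htf1 : Track a d (qs1 a) \/ Frozen a d (qs1 a).
  case: (boolP (a \in l)) => al; last by rewrite Ho1 //; apply: Htf.
  case: (Hs1 a al Ia) => [|[v [r [? [? [? _]]]]]]; first by right.
  by left; exists v, r.
have [qs2 [Hr2 [Hs2 Ho2]]] := sat_one Ia Hr1 Htf1.
exists qs2; split=> //; split.
  move=> i; rewrite inE; case: (eqVneq i a) => [-> _ _ //|nia] /= il Ii.
  by rewrite Ho2 //; apply: Hs1.
move=> i; rewrite inE negb_or => /andP [nia il].
by rewrite Ho2 // Ho1.
have [qs' [Hr' [Hs _]]] := gen (enum 'I_n).
by exists qs'; split=> // i; apply: Hs; rewrite mem_enum.
Qed.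

Lemma sat_late i d x : Ic Sc sigma i -> ds i <= d -> Sat i d x -> Frozen i d x.
Proof.
move=> Ii hd [//|[v [r [Hu [Hv [Hp Hh]]]]]].
have [hdk [hkd hpu]] := hds Ii.
have Hr : proj (So i) r = [::].
  move: hpu; rewrite Hu proj_cat Hp => /(congr1 size).
  rewrite (_ : d = ds i + (d - ds i)); last by lia.
  rewrite takeD !proj_cat !size_cat => H; apply: size0nil; lia.
have Er : r = [::].
  case: r Hr Hh {Hu} => // e r' Hr Hh.
  by move: Hr; rewrite /proj /= (Hh e r' erefl).
move: Hu; rewrite Er cats0 => Hu.
split; first lia.
by apply: hu_gam; rewrite // Hu.
Qed.

Lemma step q qs d : d < k -> reach (q, qs, d) ->
  ext deltaH q0 (t0 ++ take d w) = Some q ->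
  (forall i, Ic Sc sigma i -> Sat i d (qs i)) ->
  exists q' qs', reach (q', qs', d.+1) /\
    ext deltaH q0 (t0 ++ take d.+1 w) = Some q' /\
    (forall i, Ic Sc sigma i -> Track i d.+1 (qs' i) \/ Frozen i d.+1 (qs' i)).
Proof.
move=> hdk Hr hq Hsat.
set e := nth sigma w d.
have Ete : take d.+1 w = rcons (take d w) e by apply: take_nth; rewrite hwk.
have [q' hq'] : exists q', ext deltaH q0 (t0 ++ take d.+1 w) = Some q'.
  have hh : ext deltaH q0 ((t0 ++ take d.+1 w) ++ drop d.+1 w) <> None
    by rewrite -catA cat_take_drop.
  exact: ext_prefix hh.
have hqe : deltaH q e = Some q' by move: hq'; rewrite Ete -rcons_cat ext_rcons hq.
pose P i := Ic Sc sigma i /\ (C1 So No k d i (qs i) e \/ C3 QH deltaH So No sigma k d i (qs i) e).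
pose qs' i := if excluded_middle_informative (P i) then odflt (qs i) (deltaH (qs i) e) else qs i.
have key : forall i, P i -> exists y, deltaH (qs i) e = Some y /\ Track i d.+1 y.
  move=> i [Ii Hc]; have eSo : e \in So i by case: Hc => [[_ ?]|[_ [_ ?]]].
  case: (Hsat i Ii) => [[hk hg]|[v [r [Hu [Hv [Hp Hh]]]]]].
    by exfalso; case: Hc => [[hlt _]|[_ [hng _]]] //; lia.
  have [hdsk [hkd hpu]] := hds Ii.
  case: (leqP (ds i) d) => hdd.
    have HS : Sat i d (qs i) by right; exists v, r.
    have [hk hg] := sat_late Ii hdd HS.
    by exfalso; case: Hc => [[hlt _]|[_ [hng _]]] //; lia.
  have Hpr : exists Z, proj (So i) r = e :: Z.
    move: hpu; rewrite (_ : ds i = d.+1 + (ds i - d.+1)); last by lia.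
    rewrite takeD Ete catA -rcons_cat -cats1 -catA /=.
    set L := t0 ++ take d w; set Y := take _ _.
    rewrite Hu proj_cat Hp [proj _ (L ++ _)]proj_cat => H.
    have -> := catlI H; rewrite /proj /= eSo; by eexists.
  case: r Hu Hh Hpr => [|e' r'] Hu Hh [Z HZ]; first by [].
  have e'So := Hh e' r' erefl.
  move: HZ; rewrite /proj /= e'So => -[Ee _]; subst e'.
  have := hu_ext Ii; rewrite Hu -cat_rcons => /ext_prefix [y].
  rewrite ext_rcons Hv => Hy; exists y; split=> //.
  exists (rcons v e), r'; split; first by rewrite cat_rcons.
  split; first by rewrite ext_rcons Hv.
  by rewrite Ete -rcons_cat !proj_rcons eSo Hp.
exists q', qs'; split; last split=> //.
  apply: (VR_step1 Hr); exists e, q', qs'; split=> //; split=> //; split.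
    move=> i Ii Hc; have Pi : P i by split.
    rewrite /qs'; case: (excluded_middle_informative (P i)) => [_|//] /=.
    by have [y [-> _]] := key i Pi.
  split=> // i nP; rewrite /qs'; by case: (excluded_middle_informative (P i)).
move=> i Ii; rewrite /qs'; case: (excluded_middle_informative (P i)) => [Pi|nP] /=.
  by have [y [-> HT]] := key i Pi; left.
case: (Hsat i Ii) => [[hk hg]|[v [r [Hu [Hv [Hp Hh]]]]]].
  by right; split=> //; lia.
case: (boolP (e \in So i)) => eSo; last first.
  left; exists v, r; split=> //; split=> //.
  by rewrite Ete -rcons_cat proj_rcons (negbTE eSo) Hp.
have hk : k - d <= No i.
  by case: (leqP (k - d) (No i)) => // hlt; exfalso; apply: nP; split=> //; left.
have hg : GammaAug QH deltaH (No i) (qs i) sigma.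
  by apply: NNPP => hng; apply: nP; split=> //; right.
by right; split=> //; lia.
Qed.


Lemma init_ok : (k < Nmax Sc No sigma -> t0 = [::]) ->
  (~~ (k < Nmax Sc No sigma) -> k = Nmax Sc No sigma) ->
  exists q qs, reach (q, qs, 0) /\ ext deltaH q0 (t0 ++ take 0 w) = Some q /\
    (forall i, Ic Sc sigma i -> Track i 0 (qs i) \/ Frozen i 0 (qs i)).
Proof.
move=> ht0 hkN; case hk: (k < Nmax Sc No sigma).
  rewrite (ht0 hk); exists q0, (fun _ => q0); split.
    by apply: VR_init; rewrite /v_init hk.
  split; first by rewrite take0.
  by move=> i Ii; left; exists [::], (u i); rewrite take0 (ht0 hk).
have [q hq] : exists q, ext deltaH q0 t0 = Some q by exact: ext_prefix hs.
have : forall i, exists x : Q, (Ic Sc sigma i -> exists v r, u i = v ++ r /\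
    ext deltaH q0 v = Some x /\ proj (So i) v = proj (So i) t0) /\
    (~~ Ic Sc sigma i -> x = q0).
  move=> i; case: (boolP (Ic Sc sigma i)) => Ii; last first.
    by exists q0; split=> // H; rewrite H in Ii.
  have [_ [_ hpu]] := hds Ii; rewrite proj_cat in hpu.
  have [v [r [Hu Hp]]] := proj_prefix hpu.
  have h : ext deltaH q0 (v ++ r) <> None by rewrite -Hu; apply: hu_ext.
  have [x hx] := ext_prefix h.
  by exists x; split=> // _; exists v, r.
move=> /fin_all_exists [qs Hqs].
exists q, qs; split.
  apply: VR_init; rewrite /v_init hk; split=> //; split; first by apply: hkN; rewrite hk.
  exists t0; split; first by rewrite /lang hq.
  split=> // i; have [H1 H2] := Hqs i; split=> // Ii.
  have [v [r [_ [Hv Hp]]]] := H1 Ii; exists v; split=> //; by rewrite /lang Hv.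
split; first by rewrite take0 cats0.
move=> i Ii; left; have [H1 _] := Hqs i; have [v [r [Hu [Hv Hp]]]] := H1 Ii.
by exists v, r; rewrite take0 cats0.
Qed.

Lemma all_d (hinit : exists q qs, reach (q, qs, 0) /\
    ext deltaH q0 (t0 ++ take 0 w) = Some q /\
    (forall i, Ic Sc sigma i -> Track i 0 (qs i) \/ Frozen i 0 (qs i))) :
  forall d, d <= k -> exists q qs, reach (q, qs, d) /\
    ext deltaH q0 (t0 ++ take d w) = Some q /\
    (forall i, Ic Sc sigma i -> Track i d (qs i) \/ Frozen i d (qs i)).
Proof.
elim=> [_|d IH hd]; first exact: hinit.
have [q [qs [Hr [hq Htf]]]] := IH (ltnW hd).
have [qs1 [Hr1 Hs1]] := sat_all Hr Htf.
exact: step hd Hr1 hq Hs1.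
Qed.

Lemma final_state (hinit : exists q qs, reach (q, qs, 0) /\
    ext deltaH q0 (t0 ++ take 0 w) = Some q /\
    (forall i, Ic Sc sigma i -> Track i 0 (qs i) \/ Frozen i 0 (qs i))) :
  exists q qs, reach (q, qs, k) /\ ext deltaH q0 (t0 ++ w) = Some q /\
    (forall i, Ic Sc sigma i -> GammaAug QH deltaH (No i) (qs i) sigma).
Proof.
have [q [qs [Hr [hq Htf]]]] := all_d hinit (leqnn k).
have [qs1 [Hr1 Hs1]] := sat_all Hr Htf.
exists q, qs1; split=> //; split; first by rewrite -hwk take_size in hq.
move=> i Ii; have [hdk _] := hds Ii.
by have [_ ?] := sat_late Ii hdk (Hs1 i Ii).
Qed.

End Construct.

Theorem theorem2 (Q Sigma : finType) (delta : Q -> Sigma -> option Q) (q0 : Q)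
  (QH : {set Q}) (deltaH : Q -> Sigma -> option Q)
  (n : nat) (So Sc : 'I_n -> {set Sigma}) (No : 'I_n -> nat) (sigma : Sigma) :
  q0 \in QH ->
  (forall q e q', q \in QH -> deltaH q e = Some q' ->
      q' \in QH /\ delta q e = Some q') ->
  (exists i, sigma \in Sc i) ->
  delay_coobservable delta deltaH q0 So Sc No sigma <->
  (forall k, k <= Nmax Sc No sigma ->
     ~ exists (q : Q) (qs : 'I_n -> Q),
         v_reach QH deltaH q0 So Sc No sigma k (q, qs, k) /\
         delta q sigma <> None /\ deltaH q sigma = None /\
         (forall i, sigma \in Sc i -> GammaAug QH deltaH (No i) (qs i) sigma)).
Proof.
move=> q0H hsub _; split.
  by move=> Hco k _; apply: (sound q0H hsub Hco).
move=> Hno s Ls LGs NLHs.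
apply: NNPP => Hne.
have Hall : forall i, Ic Sc sigma i -> exists U,
    Theta_inv delta q0 (So i) (No i) (Theta (So i) (No i) s) U /\
    lang deltaH q0 (rcons U sigma).
  move=> i Ii; apply: NNPP => hn; apply: Hne; exists i; split=> // U HU HL.
  by apply: hn; exists U.
pose N := Nmax Sc No sigma.
pose k := minn (size s) N.
have hks : k <= size s by rewrite /k geq_minl.
have hkN : k <= N by rewrite /k geq_minr.
pose t0 := take (size s - k) s.
pose w := drop (size s - k) s.
have hwk : size w = k by rewrite /w size_drop; lia.
have hst : s = t0 ++ w by rewrite cat_take_drop.
have ht0 : size t0 = size s - k by rewrite /t0 size_takel // leq_subr.
have : forall i, exists p : seq Sigma * nat, Ic Sc sigma i ->
    [/\ ext deltaH q0 p.1 <> None,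
        (forall x, ext deltaH q0 p.1 = Some x -> GammaAug QH deltaH (No i) x sigma),
        p.2 <= k, k - p.2 <= No i &
        proj (So i) p.1 = proj (So i) (t0 ++ take p.2 w)].
  move=> i; case: (boolP (Ic Sc sigma i)) => Ii; last first.
    by exists ([::], 0).
  have [U [[LU [t [[m [hm ht]] [m' [hm' ht']]]]] HL]] := Hall i Ii.
  have hNi : No i <= N by apply: (leq_bigmax_cond (F := No) i Ii).
  pose u' := trunc U m'.
  pose s'' := drop (size U - m') U.
  have hU : U = u' ++ s'' by rewrite cat_take_drop.
  have [pU hpU] : exists p, ext deltaH q0 U = Some p.
    have h : ext deltaH q0 (U ++ [:: sigma]) <> None by rewrite cats1.
    exact: ext_prefix h.
  have hps : deltaH pU sigma <> None by move: HL; rewrite /lang ext_rcons hpU.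
  exists (u', k - m) => _ /=; split.
  - by have := hpU; rewrite hU ext_cat; case: (ext deltaH q0 u').
  - move=> x hx; have [xH _] := sub_ext hsub q0H hx.
    case E: (deltaH x sigma) => [y|].
      by exists (Some y); split=> //; left; exists y.
    exists None; split=> //; right; split=> //; split=> //.
    exists s'', pU; split; first by rewrite /s'' size_drop; lia.
    by split=> //; move: hpU; rewrite hU ext_cat hx.
  - exact: leq_subr.
  - lia.
  - rewrite /u' -ht' ht /trunc; congr proj.
    case: (leqP m k) => hmk.
      rewrite (_ : size s - m = size t0 + (k - m)); last by lia.
      rewrite {1}hst.
      by rewrite takeD take_size_cat // drop_size_cat.
    have hk : k = size s by move: hmk; rewrite /k; lia.
    rewrite (_ : size s - m = 0); last by lia.
    rewrite (_ : k - m = 0); last by lia.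
    by rewrite /t0 (_ : size s - k = 0) ?take0 //; lia.
move=> /fin_all_exists [f Hf].
pose u i := (f i).1; pose ds i := (f i).2.
have hs : ext deltaH q0 (t0 ++ w) <> None by rewrite -hst.
have hu_ext : forall i, Ic Sc sigma i -> ext deltaH q0 (u i) <> None.
  by move=> i Ii; case: (Hf i Ii).
have hu_gam : forall i, Ic Sc sigma i -> forall x,
    ext deltaH q0 (u i) = Some x -> GammaAug QH deltaH (No i) x sigma.
  by move=> i Ii; case: (Hf i Ii).
have hds : forall i, Ic Sc sigma i -> ds i <= k /\ k - ds i <= No i /\
    proj (So i) (u i) = proj (So i) (t0 ++ take (ds i) w).
  by move=> i Ii; case: (Hf i Ii).
have eN : N = Nmax Sc No sigma by [].
have ek : k = minn (size s) N by [].
have h1 : k < Nmax Sc No sigma -> t0 = [::].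
  move=> hlt; rewrite /t0 (_ : size s - k = 0) ?take0 //; lia.
have h2 : ~~ (k < Nmax Sc No sigma) -> k = Nmax Sc No sigma.
  move=> /negP hlt; lia.
have hinit := init_ok QH hs hu_ext hds h1 h2.
have [q [qs [Hr [hq Hg]]]] := final_state hwk hs hu_ext hu_gam hds hinit.
have hq' : ext deltaH q0 s = Some q by rewrite hst.
apply: (Hno k hkN); exists q, qs; split=> //; split.
  have [_ hG] := sub_ext hsub q0H hq'.
  by move: LGs; rewrite /lang ext_rcons hG.
split; last exact: Hg.
move: NLHs; rewrite /lang ext_rcons hq'.
case: (deltaH q sigma) => // y H; exfalso; exact: H.
Qed.
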